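(* Let $V$ be a filled sparsity pattern, $X\in\mathbb S^n_V$ positive definite and $Y\in\mathbb S^n_V$. Let $X+tY=L(t)D(t)L(t)^T$ ($L(t)$ unit lower triangular, $D(t)$ positive diagonal) for $t$ near $0$, $L=L(0)$, $D=D(0)$, and $L',D'$ the derivatives at $t=0$. Let $S=\mathcal P(X^{-1})$ and $T=\mathcal P(X^{-1}YX^{-1})$ (so $T=-\frac{d}{dt}\mathcal P((X+tY)^{-1})|_{t=0}$). Then for every $j$, $$\begin{bmatrix}1&L_{I_j j}^T\\0&I\end{bmatrix}\begin{bmatrix}T_{jj}&T_{I_j j}^T\\ T_{I_j j}&T_{I_jI_j}\end{bmatrix}\begin{bmatrix}1&0\\ L_{I_j j}&I\end{bmatrix}=\begin{bmatrix}D'_{jj}/D_{jj}^2&(S_{I_jI_j}L'_{I_j j})^T\\ S_{I_jI_j}L'_{I_j j}&T_{I_jI_j}\end{bmatrix}.$$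
   Context: A symmetric sparsity pattern $V$ is a set of pairs $(i,j)$ with $1\le j\le i\le n$ containing all $(i,i)$; it is filled (chordal) if $i>j>k$, $(i,k)\in V$, $(j,k)\in V$ imply $(i,j)\in V$. $\mathbb S^n_V$ is the set of real symmetric $n\times n$ matrices with $X_{ij}=X_{ji}=0$ whenever $i\ge j$ and $(i,j)\notin V$. $\mathcal P$ is the projection onto $\mathbb S^n_V$: $\mathcal P(A)_{ij}=A_{ij}$ if $(\max(i,j),\min(i,j))\in V$ and $0$ otherwise. For each $j$, $I_j=\{i>j:(i,j)\in V\}$ (sorted increasingly). $A_{IJ}$ is the submatrix with rows $I$ and columns $J$; $A_{Ij}$ the part of column $j$ with rows in $I$. *)

(* Defs.v *)
From HB Require Import structures.
From mathcomp Require Export all_boot all_order all_algebra.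
Set Implicit Arguments. Unset Strict Implicit. Unset Printing Implicit Defensive.
Export Order.TTheory GRing.Theory Num.Theory.
Local Open Scope ring_scope.


Definition sparsity_pattern (n : nat) (V : {set 'I_n * 'I_n}) : Prop :=
  (forall p, p \in V -> (p.2 <= p.1)%N) /\ (forall i : 'I_n, (i, i) \in V).

Definition filled (n : nat) (V : {set 'I_n * 'I_n}) : Prop :=
  forall i j k : 'I_n, (j < i)%N -> (k < j)%N ->
    (i, k) \in V -> (j, k) \in V -> (i, j) \in V.

Definition inpat (n : nat) (V : {set 'I_n * 'I_n}) (i j : 'I_n) : bool :=
  if (j <= i)%N then (i, j) \in V else (j, i) \in V.

Definition in_SV (R : nzRingType) (n : nat) (V : {set 'I_n * 'I_n}) (X : 'M[R]_n) : Prop :=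
  X^T = X /\ (forall i j : 'I_n, ~~ inpat V i j -> X i j = 0).

Definition projV (R : nzRingType) (n : nat) (V : {set 'I_n * 'I_n}) (A : 'M[R]_n) : 'M[R]_n :=
  \matrix_(i, j) (if inpat V i j then A i j else 0).

Definition posdef (R : realFieldType) (n : nat) (X : 'M[R]_n) : Prop :=
  X^T = X /\ (forall v : 'cV[R]_n, v != 0 -> 0 < (v^T *m X *m v) 0 0).

Definition unit_lower (R : nzRingType) (n : nat) (L : 'M[R]_n) : Prop :=
  (forall i j : 'I_n, (i < j)%N -> L i j = 0) /\ (forall i : 'I_n, L i i = 1).

Definition pos_diag (R : realFieldType) (n : nat) (D : 'M[R]_n) : Prop :=
  (forall i j : 'I_n, i != j -> D i j = 0) /\ (forall i : 'I_n, 0 < D i i).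

Definition has_deriv0 (R : realFieldType) (f : R -> R) (d : R) : Prop :=
  forall e : R, 0 < e -> exists2 del : R, 0 < del &
    forall t : R, 0 < `|t| < del -> `|(f t - f 0) / t - d| < e.

Definition mx_deriv0 (R : realFieldType) (m p : nat) (F : R -> 'M[R]_(m, p))
  (F' : 'M[R]_(m, p)) : Prop :=
  forall i j, has_deriv0 (fun t => F t i j) (F' i j).

Definition Iset (n : nat) (V : {set 'I_n * 'I_n}) (j : 'I_n) : {set 'I_n} :=
  [set i : 'I_n | (j < i)%N && ((i, j) \in V)].

Definition Iidx (n : nat) (V : {set 'I_n * 'I_n}) (j : 'I_n)
  (a : 'I_#|Iset V j|) : 'I_n := enum_val a.
Arguments Iidx {n} V j a.

Definition subII (R : Type) (n : nat) (V : {set 'I_n * 'I_n}) (j : 'I_n) (A : 'M[R]_n)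
  : 'M[R]_#|Iset V j| := mxsub (Iidx V j) (Iidx V j) A.
Definition subIj (R : Type) (n : nat) (V : {set 'I_n * 'I_n}) (j : 'I_n) (A : 'M[R]_n)
  : 'M[R]_(#|Iset V j|, 1) := mxsub (Iidx V j) (fun _ : 'I_1 => j) A.
Arguments subII {R n} V j A.
Arguments subIj {R n} V j A.
Arguments projV {R n} V A.
Arguments in_SV {R n} V X.
Arguments inpat {n} V i j.

(* Main.v *)
Require Import Defs.
From HB Require Import structures.
From mathcomp Require Import all_boot all_order all_algebra.
From mathcomp Require Import ring lra zify.
Import Order.TTheory GRing.Theory Num.Theory.
Set Implicit Arguments. Unset Strict Implicit. Unset Printing Implicit Defensive.
Local Open Scope ring_scope.
Section Calc.
Variable R : realFieldType.
Implicit Types (h f g : R -> R) (a b l c d : R).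

Definition lim0 h l := forall e : R, 0 < e -> exists2 del : R, 0 < del &
    forall t : R, 0 < `|t| < del -> `|h t - l| < e.

Lemma lim0_cst c : lim0 (fun _ => c) c.
Proof. by move=> e e0; exists 1 => // t _; rewrite subrr normr0. Qed.

Lemma lim0_id : lim0 id 0.
Proof. by move=> e e0; exists e => // t /andP[_]; rewrite subr0. Qed.

Lemma lim0_min h1 h2 l1 l2 e : lim0 h1 l1 -> lim0 h2 l2 -> 0 < e ->
  exists2 del : R, 0 < del & forall t : R, 0 < `|t| < del ->
     `|h1 t - l1| < e /\ `|h2 t - l2| < e.
Proof.
move=> H1 H2 e0; case: (H1 e e0) => d1 d10 P1; case: (H2 e e0) => d2 d20 P2.
have [le|le] := lerP d1 d2.
- exists d1 => // t /andP[t0 td]; split; first by apply: P1; rewrite t0.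
  by apply: P2; rewrite t0 (lt_le_trans td).
- exists d2 => // t /andP[t0 td]; split; last by apply: P2; rewrite t0.
  by apply: P1; rewrite t0 (lt_trans td).
Qed.

Lemma lim0_add h1 h2 l1 l2 : lim0 h1 l1 -> lim0 h2 l2 ->
  lim0 (fun t => h1 t + h2 t) (l1 + l2).
Proof.
move=> H1 H2 e e0; have e20 : 0 < e / 2 by rewrite divr_gt0.
case: (lim0_min H1 H2 e20) => del del0 P; exists del => // t /P [A B].
rewrite (_ : _ - _ = (h1 t - l1) + (h2 t - l2)); last by ring.
apply: (le_lt_trans (ler_normD _ _)).
have -> : e = e / 2 + e / 2 by field.
exact: ltrD.
Qed.

Lemma lim0_mul h1 h2 l1 l2 : lim0 h1 l1 -> lim0 h2 l2 ->
  lim0 (fun t => h1 t * h2 t) (l1 * l2).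
Proof.
move=> H1 H2 e e0.
set K := `|l1| + `|l2| + 1.
have K0 : 0 < K by rewrite /K ltr_wpDl // addr_ge0.
set d := e / (e + K).
have eK0 : 0 < e + K by rewrite addr_gt0.
have d0 : 0 < d by rewrite divr_gt0.
have dE : d * (e + K) = e by rewrite /d mulfVK // gt_eqF.
case: (lim0_min H1 H2 d0) => del del0 P; exists del => // t /P [A B].
rewrite (_ : _ - _ = (h1 t - l1) * (h2 t - l2) + (h1 t - l1) * l2 + l1 * (h2 t - l2)); last by ring.
set x := h1 t - l1 in A *; set y := h2 t - l2 in B *.
apply: (le_lt_trans (ler_normD _ _)).
apply: (@le_lt_trans _ _ (`|x| * `|y| + `|x| * `|l2| + `|l1| * `|y|)).
  rewrite -!normrM; apply: lerD => //; exact: ler_normD.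
have := normr_ge0 x; have := normr_ge0 y; have := normr_ge0 l1; have := normr_ge0 l2.
rewrite /K in dE K0 *.
move: A B dE; set X1 := `|x|; set Y1 := `|y|; set a1 := `|l1|; set a2 := `|l2|.
move=> *; nra.
Qed.

Lemma lim0_ext h1 h2 l r : 0 < r -> (forall t, 0 < `|t| < r -> h1 t = h2 t) ->
  lim0 h1 l -> lim0 h2 l.
Proof.
move=> r0 E H e e0; case: (H e e0) => d d0 P.
have [le|le] := lerP d r.
- exists d => // t /andP[t0 td]; rewrite -E ?t0 ?(lt_le_trans td) //.
  by apply: P; rewrite t0.
- exists r => // t /andP[t0 td]; rewrite -E ?t0 ?td //.
  by apply: P; rewrite t0 (lt_trans td).
Qed.

Lemma lim0_unique h l1 l2 : lim0 h l1 -> lim0 h l2 -> l1 = l2.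
Proof.
move=> H1 H2; case: (eqVneq l1 l2) => // ne; exfalso.
have e0 : 0 < `|l1 - l2| / 2 by rewrite divr_gt0 // normr_gt0 subr_eq0.
case: (lim0_min H1 H2 e0) => del del0 P.
have t0 : 0 < `|del / 2| < del.
  have h0 : 0 < del / 2 by rewrite divr_gt0.
  rewrite gtr0_norm // h0 /=.
  by rewrite ltr_pdivrMr // ltr_pMr // ltr1n.
case: (P _ t0) => A B.
have : `|l1 - l2| <= `|h (del/2) - l2| + `|h (del/2) - l1|.
  rewrite (_ : l1 - l2 = (h (del/2) - l2) - (h (del/2) - l1)); last by ring.
  by rewrite -(normrN (h _ - l1)) ler_normD.
move: A B e0; set a := `|l1 - l2|; set u := `|_ - l2|; set v := `|_ - l1|.
move=> A B e0 C; have : a < a / 2 + a / 2 by apply: (le_lt_trans C); rewrite addrC; apply: ltrD.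
by rewrite -splitr ltxx.
Qed.

Lemma deriv_ext f g d : (forall t, f t = g t) -> has_deriv0 f d -> has_deriv0 g d.
Proof.
move=> E; apply: (@lim0_ext _ _ _ 1) => // t _; by rewrite !E.
Qed.

Lemma deriv_cst c : has_deriv0 (fun _ => c) 0.
Proof.
apply: (@lim0_ext (fun _ => 0) _ _ 1) => //; last exact: lim0_cst.
by move=> t _; rewrite subrr mul0r.
Qed.

Lemma deriv_lin c d : has_deriv0 (fun t => c + t * d) d.
Proof.
apply: (@lim0_ext (fun _ => d) _ _ 1) => //; last exact: lim0_cst.
move=> t /andP[t0 _]; rewrite mul0r addr0 addrC addKr mulrC mulKf //.
by rewrite -normr_gt0.
Qed.

Lemma deriv_add f g a b : has_deriv0 f a -> has_deriv0 g b ->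
  has_deriv0 (fun t => f t + g t) (a + b).
Proof.
move=> Hf Hg; apply: (@lim0_ext _ _ _ 1 ltr01); last exact: lim0_add Hf Hg.
by move=> t _ /=; rewrite -mulrDl; congr (_ * _); ring.
Qed.

Lemma deriv_cont f a : has_deriv0 f a -> lim0 f (f 0).
Proof.
move=> Hf.
have H : lim0 (fun t => f 0 + t * ((f t - f 0) / t)) (f 0 + 0 * a).
  apply: lim0_add; first exact: lim0_cst.
  have Hid : lim0 (fun t : R => t) 0 := lim0_id.
  exact: (lim0_mul Hid Hf).
rewrite mul0r addr0 in H; apply: (lim0_ext ltr01 _ H) => t /andP[t0 _].
have tn : t != 0 by rewrite -normr_gt0.
rewrite mulrC mulfVK //. by rewrite addrC subrK.
Qed.

Lemma deriv_mul f g a b : has_deriv0 f a -> has_deriv0 g b ->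
  has_deriv0 (fun t => f t * g t) (a * g 0 + f 0 * b).
Proof.
move=> Hf Hg.
have H : lim0 (fun t => (f t - f 0) / t * g t + f 0 * ((g t - g 0) / t))
              (a * g 0 + f 0 * b).
  apply: lim0_add; first exact: lim0_mul Hf (deriv_cont Hg).
  exact: lim0_mul (lim0_cst _) Hg.
apply: (lim0_ext ltr01 _ H) => t /andP[t0 _].
have tn : t != 0 by rewrite -normr_gt0.
by field.
Qed.

Lemma deriv_sum (I : Type) (s : seq I) (F : I -> R -> R) (dF : I -> R) :
  (forall k, has_deriv0 (F k) (dF k)) ->
  has_deriv0 (fun t => \sum_(k <- s) F k t) (\sum_(k <- s) dF k).
Proof.
move=> HF; elim: s => [|x s IH].
  rewrite big_nil; apply: (deriv_ext _ (deriv_cst 0)) => t; by rewrite big_nil.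
rewrite big_cons; apply: (deriv_ext _ (deriv_add (HF x) IH)) => t.
by rewrite big_cons.
Qed.

Lemma deriv_unique_loc f g d1 d2 r : 0 < r -> (forall t, `|t| < r -> f t = g t) ->
  has_deriv0 f d1 -> has_deriv0 g d2 -> d1 = d2.
Proof.
move=> r0 E Hf Hg; apply: (lim0_unique _ Hg).
apply: (lim0_ext r0 _ Hf) => t /andP[_ tr].
by rewrite !E // normr0.
Qed.

Lemma mx_deriv_mul m p q (A : R -> 'M[R]_(m, p)) (B : R -> 'M[R]_(p, q)) A' B' :
  mx_deriv0 A A' -> mx_deriv0 B B' ->
  mx_deriv0 (fun t => A t *m B t) (A' *m B 0 + A 0 *m B').
Proof.
move=> HA HB i j; rewrite !mxE -big_split /=.
apply: (deriv_ext _ (deriv_sum _ (fun k => deriv_mul (HA i k) (HB k j)))) => t.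
by rewrite mxE.
Qed.

Lemma mx_deriv_tr m p (A : R -> 'M[R]_(m, p)) A' :
  mx_deriv0 A A' -> mx_deriv0 (fun t => (A t)^T) A'^T.
Proof. by move=> HA i j; rewrite mxE; apply: (deriv_ext _ (HA j i)) => t; rewrite mxE. Qed.

End Calc.
Section Alg.
Variable R : realFieldType.
Variable n : nat.
Implicit Types (A L D W : 'M[R]_n).

Definition isdiag D := forall i j : 'I_n, i != j -> D i j = 0.

Lemma mulmx_diag_r m (P : 'M[R]_(m, n)) D i k : isdiag D -> (P *m D) i k = P i k * D k k.
Proof.
move=> HD; rewrite mxE (bigD1 k) //= big1 ?addr0 // => z zk.
by rewrite HD ?mulr0.
Qed.

Lemma LDLt_entry L D i j : isdiag D ->
  (L *m D *m L^T) i j = \sum_k L i k * D k k * L j k.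
Proof.
move=> HD; rewrite mxE; apply: eq_bigr => k _; by rewrite mulmx_diag_r // mxE.
Qed.

Lemma col_ind (P : 'I_n -> Prop) :
  (forall j : 'I_n, (forall k : 'I_n, (k < j)%N -> P k) -> P j) -> forall j, P j.
Proof.
move=> H.
suff : forall m (j : 'I_n), (j < m)%N -> P j by move=> S j; exact: (S j.+1).
elim=> [//|m IH] j jm; apply: H => k kj; apply: IH.
exact: leq_trans kj _.
Qed.

Lemma fill_lemma (V : {set 'I_n * 'I_n}) A L D :
  filled V -> unit_lower L -> isdiag D -> (forall i, D i i != 0) ->
  A = L *m D *m L^T -> (forall i j, ~~ inpat V i j -> A i j = 0) ->
  forall i j : 'I_n, (j < i)%N -> (i, j) \notin V -> L i j = 0.
Proof.
move=> Vf [Lu L1] HD Dn AE A0 i j; elim/col_ind: j i => j IH i ji ijV.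
have Aij : A i j = 0 by apply: A0; rewrite /inpat ltnW.
rewrite AE LDLt_entry // (bigD1 j) //= L1 mulr1 big1 ?addr0 in Aij.
  by move/eqP: Aij; rewrite mulf_eq0 (negbTE (Dn j)) orbF => /eqP.
move=> k kj; case: (ltngtP k j) => [kltj|jltk|/val_inj kej]; last by rewrite kej eqxx in kj.
- case ikV : ((i, k) \in V); last first.
    by rewrite (IH k kltj i) ?ikV ?(ltn_trans kltj) // !mul0r.
  case jkV : ((j, k) \in V); last first.
    by rewrite (IH k kltj j) ?jkV // mulr0.
  by have := Vf i j k ji kltj ikV jkV; rewrite (negbTE ijV).
- by rewrite (Lu j k jltk) mulr0.
Qed.


Definition up (s : nat) A := forall i k : 'I_n, (k < i + s)%N -> A i k = 0.

Lemma up_mul s1 s2 A B : up s1 A -> up s2 B -> up (s1 + s2) (A *m B).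
Proof.
move=> HA HB i j ji; rewrite mxE big1 // => k _.
case: (ltnP k (i + s1)) => ks; first by rewrite HA ?mul0r.
by rewrite HB ?mulr0 // (leq_trans ji) // addnA leq_add2r.
Qed.

Lemma up_diag D : isdiag D -> up 0 D.
Proof. by move=> HD i k; rewrite addn0 => ki; apply: HD; rewrite neq_ltn ki orbT. Qed.

Lemma up_trL L : unit_lower L -> up 0 L^T.
Proof. by move=> [Lu _] i k; rewrite addn0 mxE => ki; apply: Lu. Qed.

Lemma up_trL' L' : (forall i k : 'I_n, (i <= k)%N -> L' i k = 0) -> up 1 L'^T.
Proof. by move=> HL i k; rewrite addn1 ltnS mxE => ki; apply: HL. Qed.

Lemma mulmx_diag_l D (HD : isdiag D) m (P : 'M[R]_(n, m)) i k : (D *m P) i k = D i i * P i k.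
Proof.
 rewrite mxE (bigD1 i) //= big1 ?addr0 // => z zk.
by rewrite HD ?mul0r // eq_sym.
Qed.

Lemma core L D L' D' (Y : 'M[R]_n) : unit_lower L -> isdiag D -> (forall i, D i i != 0) ->
  (forall i k : 'I_n, (i <= k)%N -> L' i k = 0) -> isdiag D' ->
  Y = (L' *m D + L *m D') *m L^T + (L *m D) *m L'^T ->
  let M := invmx (L *m D *m L^T) in let N := M *m Y *m M in
  (forall i j : 'I_n, (j < i)%N -> (N *m L) i j = (M *m L') i j) /\
  (forall j, (L^T *m N *m L) j j = D' j j / (D j j) ^+ 2).
Proof.
move=> HL HD Dn HL' HD' YE M N.
have [Lu L1] := HL.
have detL : \det L = 1.
  rewrite det_trig; last by apply/is_trig_mxP => i j; apply: Lu.
  by rewrite big1 // => i _; rewrite L1.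
have Xu : L *m D *m L^T \in unitmx.
  rewrite unitmxE !det_mulmx det_tr detL mul1r mulr1 unitfE det_trig.
    by apply/prodf_neq0 => i _.
  by apply/is_trig_mxP => i j ij; apply: HD; rewrite neq_ltn ij.
have MX : M *m (L *m D *m L^T) = 1%:M by rewrite /M mulVmx.
have [W WE] : exists W, W = M *m L by eexists.
have h1 : W *m (D *m L^T) = 1%:M by rewrite WE -MX !mulmxA.
have h2 : D *m L^T *m W = 1%:M by apply: mulmx1C.
have [E EE] : exists E, E = L^T *m W by eexists.
have Ee : forall a b, E a b = (a == b)%:R / D a a.
  move=> a b; have := congr1 (fun Z : 'M[R]_n => Z a b) h2; rewrite /= -mulmxA -EE.
  rewrite (mulmx_diag_l HD) [1%:M a b]mxE => H.
  by rewrite -H mulrC mulrA mulVf ?mul1r.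
have Eup : up 0 E.
  move=> a b; rewrite addn0 => ba; rewrite Ee.
  by move: ba; case: eqP => [->|]; rewrite ?ltnn // mul0r.
have Wup : up 0 W.
  move=> i j; rewrite addn0; elim/col_ind: j i => j IH i ji.
  have H : (W *m (D *m L^T)) i j = 0 by rewrite h1 mxE; case: eqP => // ij; rewrite ij ltnn in ji.
  move: H; rewrite mxE.
  rewrite (bigD1 j) //= big1 ?addr0.
    rewrite (mulmx_diag_l HD) mxE L1 mulr1 => /eqP.
    by rewrite mulf_eq0 (negbTE (Dn j)) orbF => /eqP.
  move=> k kj; case: (ltngtP k j) => [kltj|jltk|/val_inj kej]; last by rewrite kej eqxx in kj.
  - by rewrite IH ?mul0r // (ltn_trans kltj).
  - by rewrite (mulmx_diag_l HD) mxE Lu ?mulr0.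
have Wjj : forall j, W j j = E j j.
  move=> j; rewrite EE mxE (bigD1 j) //= mxE L1 mul1r big1 ?addr0 // => k kj.
  rewrite mxE; case: (ltngtP k j) => [kltj|jltk|/val_inj kej]; last by rewrite kej eqxx in kj.
  - by rewrite Lu ?mul0r.
  - by rewrite Wup ?mulr0 // addn0.
have Msym : M^T = M.
  have Dt : D^T = D.
    apply/matrixP => a b; rewrite mxE; case: (eqVneq a b) => [->//|ab].
    by rewrite !HD // eq_sym.
  by rewrite /M trmx_inv !trmx_mul trmxK Dt mulmxA.
have NL : N *m L = M *m L' + W *m D' *m E + W *m D *m L'^T *m W.
  rewrite /N -mulmxA -WE YE !mulmxDl !mulmxDr !mulmxDl.
  congr (_ + _ + _).
  - by rewrite -[RHS]mulmx1 -h2 !mulmxA.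
  - by rewrite EE WE !mulmxA.
  - by rewrite WE !mulmxA.
have addE : forall (A B : 'M[R]_n) a b, (A + B) a b = A a b + B a b.
  by move=> *; rewrite mxE.
split.
  move=> i j ji; rewrite NL !addE.
  have z1 : (W *m D' *m E) i j = 0.
    have U := up_mul (up_mul Wup (up_diag HD')) Eup.
    by apply: (U i j); lia.
  have z2 : (W *m D *m L'^T *m W) i j = 0.
    have U := up_mul (up_mul (up_mul Wup (up_diag HD)) (up_trL' HL')) Wup.
    by apply: (U i j); lia.
  by rewrite z1 z2 !addr0.
move=> j.
have LtM : L^T *m M = W^T by rewrite WE trmx_mul Msym.
rewrite -mulmxA NL !mulmxDr !mulmxA LtM -EE.
have z1 : (W^T *m L') j j = 0.
  rewrite -[W^T *m L']trmxK trmx_mul trmxK mxE.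
  have U := up_mul (up_trL' HL') Wup.
  by apply: (U j j); lia.
have z2 : (E *m D *m L'^T *m W) j j = 0.
  have U := up_mul (up_mul (up_mul Eup (up_diag HD)) (up_trL' HL')) Wup.
  by apply: (U j j); lia.
rewrite !addE z1 z2 add0r addr0.
have Ed : isdiag E by move=> a b ab; rewrite Ee (negbTE ab) mul0r.
rewrite mulmx_diag_r // (mulmx_diag_l Ed) !Ee eqxx.
have := Dn j; move: (D j j) (D' j j) => x y x0.
match goal with |- ?G => idtac G end. rewrite /=. by field.
Qed.

End Alg.
Lemma col_expand (R : realFieldType) n (V : {set 'I_n * 'I_n}) (j : 'I_n) k
  (P : 'M[R]_(k, n)) (Lc : 'M[R]_n) a :
  (forall z, z != j -> z \notin Iset V j -> Lc z j = 0) ->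
  (P *m Lc) a j = P a j * Lc j j +
     \sum_(b < #|Iset V j|) P a (Iidx V j b) * Lc (Iidx V j b) j.
Proof.
move=> H; rewrite mxE (bigID (fun z => z \in Iset V j)) /= addrC.
have jI : j \notin Iset V j by rewrite inE ltnn.
rewrite (bigD1 j) //= big1 ?addr0; last first.
  by move=> z /andP[zI zj]; rewrite H ?mulr0.
congr (_ + _); exact: big_enum_val.
Qed.

Lemma projV_J (R : realFieldType) n (V : {set 'I_n * 'I_n}) (j : 'I_n) (A : 'M[R]_n) a b :
  sparsity_pattern V -> filled V ->
  (a == j) || (a \in Iset V j) -> (b == j) || (b \in Iset V j) ->
  projV V A a b = A a b.
Proof.
move=> [_ Vd] Vf Ha Hb; rewrite mxE.
suff -> : inpat V a b by [].
rewrite /inpat; move: Ha Hb; rewrite !inE.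
case: (eqVneq a b) => [->|ab]; first by rewrite leqnn Vd.
case/orP=> [/eqP ea|/andP[ja ajV]]; case/orP=> [/eqP eb|/andP[jb bjV]].
- by subst; rewrite eqxx in ab.
- by subst; rewrite leqNgt jb.
- by subst; rewrite ltnW.
- case: (ltngtP a b) => [ab'|ba|/val_inj e]; last by rewrite e eqxx in ab.
  + exact: (Vf b a j ab' ja bjV ajV).
  + exact: (Vf a b j ba jb ajV bjV).
Qed.

Unset Implicit Arguments.
Theorem mainTheorem6 (R : realFieldType) (n : nat) (V : {set 'I_n * 'I_n})
  (X Y : 'M[R]_n) (Lf Df : R -> 'M[R]_n) (L' D' : 'M[R]_n) (eps : R) :
  sparsity_pattern V -> filled V ->
  in_SV V X -> posdef X -> in_SV V Y ->
  0 < eps ->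
  (forall t : R, `|t| < eps ->
     [/\ unit_lower (Lf t), pos_diag (Df t) &
         X + t *: Y = Lf t *m Df t *m (Lf t)^T]) ->
  mx_deriv0 Lf L' -> mx_deriv0 Df D' ->
  let L := Lf 0 in let D := Df 0 in
  let S := projV V (invmx X) in
  let T := projV V (invmx X *m Y *m invmx X) in
  forall j : 'I_n,
    block_mx (1%:M : 'M_1) (subIj V j L)^T 0 1%:M
    *m block_mx (T j j)%:M (subIj V j T)^T (subIj V j T) (subII V j T)
    *m block_mx (1%:M : 'M_1) 0 (subIj V j L) 1%:M
    = block_mx (D' j j / (D j j) ^+ 2)%:M (subII V j S *m subIj V j L')^T
               (subII V j S *m subIj V j L') (subII V j T).
Proof.
move=> HVs HVf [XT X0] _ [YT Y0] eps0 Hfac HLd HDd L D S T j.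
have [M ME] : exists M, M = invmx X by eexists.
have [N NE] : exists N, N = M *m Y *m M by eexists.
have e0 : `|0 : R| < eps by rewrite normr0.
have [[Lu L1] [Do Dp] XE] := Hfac 0 e0.
rewrite scale0r addr0 -/L -/D in XE Lu L1 Do Dp.
have HD : isdiag D by [].
have Dn : forall i, D i i != 0 by move=> i; rewrite gt_eqF.
have Lfill : forall t, `|t| < eps -> forall i k : 'I_n, (k < i)%N -> (i, k) \notin V -> Lf t i k = 0.
  move=> t tlt; have [HLt [Dot Dpt] XEt] := Hfac t tlt.
  apply: (@fill_lemma R n V (X + t *: Y) (Lf t) (Df t) HVf HLt Dot _ XEt).
  - by move=> i; rewrite gt_eqF.
  - by move=> a b ab; rewrite !mxE X0 // Y0 // mulr0 addr0.
have Lfill0 : forall i k : 'I_n, (k < i)%N -> (i, k) \notin V -> L i k = 0.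
  exact: Lfill.
have cstd : forall (f : R -> R) c d, (forall t, `|t| < eps -> f t = c) ->
    has_deriv0 f d -> d = 0.
  move=> f c d Hf Hd; apply: (deriv_unique_loc eps0 _ Hd (deriv_cst c)) => t tl.
  exact: Hf.
have HL' : forall i k : 'I_n, (i <= k)%N -> L' i k = 0.
  move=> i k; rewrite leq_eqVlt => /orP[/eqP/val_inj->|ik].
    apply: (cstd _ 1 _ _ (HLd k k)) => t tl; by have [[_ ->] _ _] := Hfac t tl.
  apply: (cstd _ 0 _ _ (HLd i k)) => t tl; by have [[-> //] _ _] := Hfac t tl.
have HD' : isdiag D'.
  move=> a b ab; apply: (cstd _ 0 _ _ (HDd a b)) => t tl.
  by have [_ [-> //] _] := Hfac t tl.
have L'fill : forall i k : 'I_n, (k < i)%N -> (i, k) \notin V -> L' i k = 0.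
  move=> i k ki ikV; apply: (cstd _ 0 _ _ (HLd i k)) => t tl; exact: Lfill.
have YE : Y = (L' *m D + L *m D') *m L^T + (L *m D) *m L'^T.
  have Hd := mx_deriv_mul (mx_deriv_mul HLd HDd) (mx_deriv_tr HLd).
  apply/matrixP => a b.
  apply: (deriv_unique_loc eps0 _ (deriv_lin (X a b) (Y a b)) (Hd a b)) => t tl /=.
  by have [_ _ <-] := Hfac t tl; rewrite !mxE.
have [C1 C2] := core (conj Lu L1) HD Dn HL' HD' YE.
rewrite -XE -ME -NE in C1 C2.
have Msym : M^T = M by rewrite ME trmx_inv XT.
have Nsym : N^T = N by rewrite NE !trmx_mul Msym YT mulmxA.
have NsE : forall a b, N a b = N b a by move=> a b; rewrite -[in LHS]Nsym mxE.
have TE : T = projV V N by rewrite NE ME.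
have SE : S = projV V M by rewrite ME.
clearbody T S.
have inI : forall b, Iidx V j b \in Iset V j by move=> b; exact: enum_valP.
have inJI : forall b, (Iidx V j b == j) || (Iidx V j b \in Iset V j).
  by move=> b; rewrite inI orbT.
have inJj : (j == j) || (j \in Iset V j) by rewrite eqxx.
have TII : forall b c, T (Iidx V j b) (Iidx V j c) = N (Iidx V j b) (Iidx V j c).
  by move=> b c; rewrite TE (@projV_J R n V j).
have TIj : forall b, T (Iidx V j b) j = N (Iidx V j b) j.
  by move=> b; rewrite TE (@projV_J R n V j).
have Tjj : T j j = N j j by rewrite TE (@projV_J R n V j).
have SII : forall b c, S (Iidx V j b) (Iidx V j c) = M (Iidx V j b) (Iidx V j c).
  by move=> b c; rewrite SE (@projV_J R n V j).
have jltI : forall b, (j < Iidx V j b)%N by move=> b; have := inI b; rewrite inE => /andP[].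
have suppL : forall z, z != j -> z \notin Iset V j -> L z j = 0.
  move=> z zj zI; case: (ltngtP z j) => [zlt|jz|/val_inj e]; last by rewrite e eqxx in zj.
  - exact: Lu.
  - by apply: Lfill0 => //; move: zI; rewrite inE jz.
have suppL' : forall z, z != j -> z \notin Iset V j -> L' z j = 0.
  move=> z zj zI; case: (ltngtP z j) => [zlt|jz|/val_inj e]; last by rewrite e eqxx in zj.
  - by apply: HL'; rewrite ltnW.
  - by apply: L'fill => //; move: zI; rewrite inE jz.
have E3 : subIj V j T + subII V j T *m subIj V j L = subII V j S *m subIj V j L'.
  apply/matrixP => a z; rewrite /subII /subIj !mxE TIj.
  under eq_bigr do rewrite !mxE TII.
  under [RHS]eq_bigr do rewrite !mxE SII.
  have h := @col_expand R n V j n N L (Iidx V j a) suppL.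
  have h' := @col_expand R n V j n M L' (Iidx V j a) suppL'.
  rewrite L1 mulr1 in h; rewrite HL' // mulr0 add0r in h'.
  by rewrite -h -h' C1.
have QT : (subII V j T)^T = subII V j T.
  by apply/matrixP => a b; rewrite /subII !mxE !TII NsE.
have E2 : (subIj V j T)^T + (subIj V j L)^T *m subII V j T =
          (subII V j S *m subIj V j L')^T.
  by rewrite -E3 linearD /= trmx_mul QT.
have LN : L^T *m N = (N *m L)^T by rewrite trmx_mul Nsym.
have R1 : (L^T *m N *m L) j j = (N j j + \sum_c N j (Iidx V j c) * L (Iidx V j c) j) +
   \sum_b (N (Iidx V j b) j + \sum_c N (Iidx V j b) (Iidx V j c) * L (Iidx V j c) j)
        * L (Iidx V j b) j.
  rewrite (col_expand _ _ suppL) L1 mulr1 LN mxE.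
  rewrite (col_expand _ _ suppL) L1 mulr1.
  congr (_ + _); apply: eq_bigr => b _; rewrite mxE.
  by rewrite (col_expand _ _ suppL) L1 mulr1.
have E1 : (T j j)%:M + (subIj V j L)^T *m subIj V j T +
     ((subIj V j T)^T + (subIj V j L)^T *m subII V j T) *m subIj V j L =
     (D' j j / D j j ^+ 2)%:M.
  apply/matrixP => a b; rewrite !ord1 [RHS]mxE -(C2 j) R1 eqxx mulr1n.
  rewrite /subII /subIj !mxE eqxx mulr1n Tjj.
  congr (_ + _ + _).
  - by apply: eq_bigr => c _; rewrite !mxE TIj NsE mulrC.
  - apply: eq_bigr => c _; rewrite !mxE TIj; congr ((_ + _) * _).
    by apply: eq_bigr => d _; rewrite !mxE TII NsE mulrC.
rewrite !mulmx_block !mul1mx !mulmx1 !mul0mx !mulmx0 ?add0r ?addr0.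
by rewrite E1 E2 E3.
Qed.
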